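(* For all integers $m \geq 3$ and $n \geq 1$, $s_{n,m}(112,122)=2^{n-1}$.
   Context: For positive integers $n,m$, $[n]_m$ denotes the regular multiset $\{1^m,2^m,\ldots,n^m\}$ (each element of $[n]=\{1,\dots,n\}$ occurs exactly $m$ times), and a permutation of $[n]_m$ is a sequence of length $nm$ in which each $i\in[n]$ appears exactly $m$ times. A sequence $\sigma=\sigma_1\cdots\sigma_L$ of integers contains a pattern $\pi=\pi_1\cdots\pi_k$ (a sequence of positive integers, possibly with repeated letters) if there are indices $i_1<\dots<i_k$ such that for all $a,b$: $\sigma_{i_a}<\sigma_{i_b}\iff \pi_a<\pi_b$ and $\sigma_{i_a}=\sigma_{i_b}\iff\pi_a=\pi_b$ (i.e. the subsequence is order-isomorphic to $\pi$); otherwise $\sigma$ avoids $\pi$. For a set of patterns $\Pi$, $s_{n,m}(\Pi)$ is the number of permutations of $[n]_m$ avoiding every pattern in $\Pi$. *)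

(* Defs.v *)
From mathcomp Require Import all_boot.
Set Implicit Arguments. Unset Strict Implicit. Unset Printing Implicit Defensive.

Fixpoint subseqs (s : seq nat) : seq (seq nat) :=
  if s is x :: s' then
    let r := subseqs s' in [seq x :: t | t <- r] ++ r
  else [:: [::]].

Definition order_iso (t p : seq nat) : bool :=
  (size t == size p) &&
  all (fun a => all (fun b =>
     ((nth 0 t a < nth 0 t b) == (nth 0 p a < nth 0 p b)) &&
     ((nth 0 t a == nth 0 t b) == (nth 0 p a == nth 0 p b)))
     (iota 0 (size p))) (iota 0 (size p)).

Definition contains (sigma p : seq nat) : bool :=
  has (fun t => order_iso t p) (subseqs sigma).

Definition avoids_all (Pi : seq (seq nat)) (sigma : seq nat) : bool :=
  all (fun p => ~~ contains sigma p) Pi.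

Fixpoint words (n L : nat) : seq (seq nat) :=
  if L is L'.+1 then [seq i :: w | i <- iota 1 n, w <- words n L'] else [:: [::]].

Definition is_multiperm (n m : nat) (sigma : seq nat) : bool :=
  (size sigma == n * m) && all (fun x => 0 < x <= n) sigma &&
  all (fun i => count_mem i sigma == m) (iota 1 n).

Definition s_nm (n m : nat) (Pi : seq (seq nat)) : nat :=
  size [seq w <- words n (n * m) | is_multiperm n m w && avoids_all Pi w].

(* Main.v *)
Require Import Defs.
From mathcomp Require Import all_boot zify.

Lemma oiso112 x y z : order_iso [:: x; y; z] [:: 1; 1; 2] -> x = y /\ x < z.
Proof.
rewrite /order_iso /= => /and4P [/and4P [_ /andP[_ /eqP e1] /andP[/eqP e2 _] _] _ _ _].
by split; [apply/eqP; rewrite e1 | rewrite e2].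
Qed.

Lemma oiso122 x y z : order_iso [:: x; y; z] [:: 1; 2; 2] -> y = z /\ x < y.
Proof.
rewrite /order_iso /= => /and4P [/and4P [_ /andP[/eqP e1 _] _ _] /and4P[_ _ /andP[_ /eqP e2] _] _ _].
by split; [apply/eqP; rewrite e2 | rewrite e1].
Qed.

Lemma oiso112' a b : a < b -> order_iso [:: a; a; b] [:: 1; 1; 2].
Proof.
move=> h; rewrite /order_iso /= ltnn eqxx h (ltn_eqF h) (gtn_eqF h).
by rewrite (leq_gtF (ltnW h)) !ltnn !eqxx.
Qed.

Lemma oiso122' a b : a < b -> order_iso [:: a; b; b] [:: 1; 2; 2].
Proof.
move=> h; rewrite /order_iso /= ltnn eqxx h (ltn_eqF h) (gtn_eqF h).
by rewrite (leq_gtF (ltnW h)) !ltnn !eqxx.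
Qed.

Lemma mem_subseqs s t : (t \in subseqs s) = subseq t s.
Proof.
elim: s t => [|x s IH] t /=; first by case: t.
rewrite mem_cat IH; case: t => [|y t] /=.
  by rewrite sub0seq orbT.
case: (eqVneq y x) => [->|ne].
  rewrite mem_map; last by move=> u v [].
  rewrite IH; apply/idP/idP => [/orP[//|]|->//].
  by apply: subseq_trans; apply: subseq_cons.
suff -> : (y :: t \in [seq x :: i | i <- subseqs s]) = false by [].
by apply/negbTE/mapP => -[u _ [e _]]; rewrite e eqxx in ne.
Qed.

Definition av (s : seq nat) := forall a b, a < b ->
  subseq [:: a; a; b] s = false /\ subseq [:: a; b; b] s = false.

Lemma avoidsP s : avoids_all [:: [:: 1; 1; 2]; [:: 1; 2; 2]] s <-> av s.
Proof.
rewrite /avoids_all /= andbT /contains; split.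
  move=> /andP[/hasPn h1 /hasPn h2] a b hab; split; apply/negbTE.
    by apply/negP; rewrite -mem_subseqs => /h1; rewrite oiso112'.
  by apply/negP; rewrite -mem_subseqs => /h2; rewrite oiso122'.
move=> h; apply/andP; split; apply/hasPn => t; rewrite mem_subseqs => st;
  apply/negP => oi; have := oi; rewrite /order_iso => /andP[/eqP sz _];
  case: t st oi sz => [|x [|y [|z [|]]]] //= st oi _.
  by have [e lt] := oiso112 _ _ _ oi; subst y; have [e1 _] := h x z lt; rewrite e1 in st.
by have [e lt] := oiso122 _ _ _ oi; subst z; have [_ e1] := h x y lt; rewrite e1 in st.
Qed.

Lemma mem_words n L w :
  (w \in words n L) = (size w == L) && all (fun x => 0 < x <= n) w.
Proof.
elim: L w => [|L IH] [|x w] //=.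
  apply/allpairsP => -[[? ?] [_ _ //]].
apply/allpairsP/idP.
  move=> [[i u] [/= hi hu [-> ->]]]; rewrite mem_iota in hi.
  rewrite IH in hu; case/andP: hu => /eqP -> ->; rewrite eqxx /= andbT.
  lia.
move=> /andP[/eqP [sw] /andP[hx hw]]; exists (x, w); split => //=.
  rewrite mem_iota; lia.
by rewrite IH sw eqxx.
Qed.

Lemma uniq_words n L : uniq (words n L).
Proof.
elim: L => [|L IH] //=; apply: allpairs_uniq => //; first exact: iota_uniq.
by move=> [i u] [j v] _ _ /= [-> ->].
Qed.

Lemma subseq_strip k (c x : nat) s t : x != c ->
  subseq (x :: s) (nseq k c ++ t) = subseq (x :: s) t.
Proof. by move=> ne; elim: k => //= k IH; rewrite (negbTE ne). Qed.

Lemma subseq_skip (c x : nat) s t : x != c ->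
  subseq (x :: s) (c :: t) = subseq (x :: s) t.
Proof. by move=> ne /=; rewrite (negbTE ne). Qed.

Lemma count2_subseq (c : nat) s : 1 < count_mem c s -> subseq [:: c; c] s.
Proof.
elim: s => //= x s IH; case: (eqVneq x c) => [_|ne] /=.
  rewrite sub1seq -has_pred1 has_count /=; lia.
move=> h; apply: IH; lia.
Qed.

Lemma mpP n m s : is_multiperm n m s <->
  [/\ size s = n * m, (forall x, x \in s -> 0 < x <= n) &
      (forall i, 0 < i <= n -> count_mem i s = m)].
Proof.
rewrite /is_multiperm; split.
  move=> /andP[/andP[/eqP sz /allP ha] /allP hc]; split => // i hi.
  by apply/eqP/hc; rewrite mem_iota; lia.
move=> [sz ha hc]; rewrite sz eqxx /=; apply/andP; split; apply/allP => // i.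
by rewrite mem_iota => hi; apply/eqP/hc; lia.
Qed.

Definition f1 m c (v : seq nat) := nseq m.-1 c ++ c :: v.
Definition f2 m c (v : seq nat) := nseq m.-1 c ++ head 0 v :: c :: behead v.

Lemma av_sub s t : subseq s t -> av t -> av s.
Proof.
move=> st h a b lt; have [h1 h2] := h a b lt; split; apply/negP => H.
  by move: h1; rewrite (subseq_trans H st).
by move: h2; rewrite (subseq_trans H st).
Qed.

Lemma step_back m n v : 3 <= m -> is_multiperm n.+1 m v -> av v ->
  (is_multiperm n.+2 m (f1 m n.+2 v) /\ av (f1 m n.+2 v)) /\
  (is_multiperm n.+2 m (f2 m n.+2 v) /\ av (f2 m n.+2 v)).
Proof.
move=> hm /mpP[sz ha hc] hav.
have Nv : n.+2 \notin v by apply/negP => /ha; lia.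
have c0 : count_mem n.+2 v = 0 by apply/count_memPn.
case: v sz ha hc hav Nv c0 => [|y v'] sz ha hc hav Nv c0; first by move: sz => /=; lia.
have hy : 0 < y <= n.+1 by apply: ha; rewrite inE eqxx.
have yN : y != n.+2 by apply/eqP => e; lia.
have mp1 : is_multiperm n.+2 m (f1 m n.+2 (y :: v')).
  apply/mpP; split.
  + rewrite /f1 size_cat size_nseq /=; move: sz => /= sz; lia.
  + move=> x; rewrite /f1 mem_cat mem_nseq inE => /orP[/andP[_ /eqP ->]|/orP[/eqP ->|/ha]]; lia.
  + move=> i hi; rewrite /f1 count_cat count_nseq /=.
    case: (eqVneq i n.+2) => [->|ne].
      move: c0 => /=; lia.
    have hi' : 0 < i <= n.+1 by move/eqP: ne; lia.
    have := hc i hi'; rewrite /=; lia.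
have mp2 : is_multiperm n.+2 m (f2 m n.+2 (y :: v')).
  apply/mpP; split.
  + rewrite /f2 size_cat size_nseq /=; move: sz => /= sz; lia.
  + move=> x; rewrite /f2 /= mem_cat mem_nseq !inE => /orP[/andP[_ /eqP ->]|/orP[/eqP ->|/orP[/eqP ->|hx]]]; try lia.
    by have := ha x; rewrite inE hx orbT => /(_ isT); lia.
  + move=> i hi; rewrite /f2 /= count_cat count_nseq /=.
    case: (eqVneq i n.+2) => [->|ne].
      move: c0 => /=; lia.
    have hi' : 0 < i <= n.+1 by move/eqP: ne; lia.
    have := hc i hi'; rewrite /=; lia.
have bnd1 : forall x, x \in f1 m n.+2 (y :: v') -> x <= n.+2.
  by move: mp1 => /mpP[_ h _] x /h; lia.
have bnd2 : forall x, x \in f2 m n.+2 (y :: v') -> x <= n.+2.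
  by move: mp2 => /mpP[_ h _] x /h; lia.
split; split => //.
- move=> a b lt; have [h1 h2] := hav a b lt.
  split; apply/negP => st.
    have : b <= n.+2 by apply: bnd1; apply: (mem_subseq st); rewrite !inE eqxx !orbT.
    move=> bN; have ne : a != n.+2 by apply/eqP; lia.
    by move: st; rewrite /f1 subseq_strip // subseq_skip // h1.
  have : b <= n.+2 by apply: bnd1; apply: (mem_subseq st); rewrite !inE eqxx !orbT.
  move=> bN; have ne : a != n.+2 by apply/eqP; lia.
  by move: st; rewrite /f1 subseq_strip // subseq_skip // h2.
- move=> a b lt; have [h1 h2] := hav a b lt.
  split; apply/negP => st.
    have : b <= n.+2 by apply: bnd2; apply: (mem_subseq st); rewrite !inE eqxx !orbT.
    move=> bN; have ne : a != n.+2 by apply/eqP; lia.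
    move: st; rewrite /f2 subseq_strip //=.
    case: (eqVneq a y) => [ay|ay].
      subst a; rewrite ?(negbTE ne) ?subseq_skip // => st.
      by move: h1; rewrite /= eqxx st.
    rewrite ?(negbTE ne) ?subseq_skip // => st.
    by move: h1; rewrite (subseq_trans st (subseq_cons _ _)).
  have : b <= n.+2 by apply: bnd2; apply: (mem_subseq st); rewrite !inE eqxx !orbT.
  move=> bN; have ne : a != n.+2 by apply/eqP; lia.
  move: st; rewrite /f2 subseq_strip //=.
  case: (eqVneq a y) => [ay|ay].
    subst a.
    case: (eqVneq b n.+2) => [eb|nb].
      subst b; rewrite sub1seq => hN.
      by move: Nv; rewrite inE hN orbT.
    move=> st.
    by move: h2; rewrite /= eqxx st.
  rewrite ?(negbTE ne) ?subseq_skip // => st.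
  by move: h2; rewrite (subseq_trans st (subseq_cons _ _)).
Qed.

Lemma split_prefix (c : nat) s : exists j t, s = nseq j c ++ t /\
  (t = [::] \/ exists y r, t = y :: r /\ y != c).
Proof.
elim: s => [|x s [j [t [-> H]]]]; first by exists 0, [::]; split => //; left.
case: (eqVneq x c) => [->|ne]; first by exists j.+1, t.
by exists 0, (x :: nseq j c ++ t); split => //; right; exists x, (nseq j c ++ t).
Qed.

Lemma filter_nseq j (c : nat) t :
  filter (predC1 c) (nseq j c ++ t) = filter (predC1 c) t.
Proof. by elim: j => //= j ->; rewrite eqxx. Qed.

Lemma filter_id1 (c : nat) t : count_mem c t = 0 -> filter (predC1 c) t = t.
Proof.
move=> /count_memPn h; apply/all_filterP/allP => x xt /=.
by apply/eqP => e; move: h; rewrite -e xt.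
Qed.

Lemma nseqS_cat k (c : nat) s : nseq k.+1 c ++ s = nseq k c ++ c :: s.
Proof. by elim: k => //= k ->. Qed.

Lemma step_fwd m n w : 3 <= m -> is_multiperm n.+2 m w -> av w ->
  [/\ is_multiperm n.+1 m (filter (predC1 n.+2) w), av (filter (predC1 n.+2) w) &
   (w = f1 m n.+2 (filter (predC1 n.+2) w) \/ w = f2 m n.+2 (filter (predC1 n.+2) w))].
Proof.
move=> hm mpw hav; have [sz ha hc] := iffLR (mpP _ _ _) mpw.
have cN : count_mem n.+2 w = m by apply: hc; lia.
split.
- apply/mpP; split.
  + rewrite size_filter.
    have e : count (predC1 n.+2) w = count (predC (pred1 n.+2)) w by apply: eq_count.
    have := count_predC (pred1 n.+2) w; rewrite -e sz cN; lia.
  + move=> x; rewrite mem_filter => /andP[/= ne /ha]; move/eqP: ne; lia.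
  + move=> i hi; rewrite count_filter -(hc i); last by lia.
    apply: eq_count => x /=; case: (eqVneq x i) => [->|] //=.
    by apply/eqP; lia.
- exact: av_sub (filter_subseq _ _) hav.
have [j [t [ew [et|[y [r [et yN]]]]]]] := split_prefix n.+2 w; subst w t.
  have : count_mem 1 (nseq j n.+2 ++ [::]) = m by apply: hc.
  rewrite cats0 count_nseq /=; lia.
rewrite filter_nseq.
have yin : y \in nseq j n.+2 ++ y :: r by rewrite mem_cat inE eqxx orbT.
have hy := ha y yin.
have yl : y < n.+2 by move/eqP: yN; lia.
have cw : count_mem n.+2 (nseq j n.+2 ++ y :: r) = j + count_mem n.+2 r.
  by rewrite count_cat count_nseq /= (negbTE yN) eq_refl mul1n.
have cr : count_mem n.+2 r <= 1.
  rewrite leqNgt; apply/negP => /count2_subseq st.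
  have [_ h2] := hav y n.+2 yl.
  have st2 : subseq [:: y; n.+2; n.+2] (nseq j n.+2 ++ y :: r).
    apply: subseq_trans (suffix_subseq (nseq j n.+2) (y :: r)).
    by rewrite /= eqxx.
  by rewrite st2 in h2.
have sw : forall p, subseq p (y :: r) -> subseq p (nseq j n.+2 ++ y :: r).
  by move=> p h; apply: subseq_trans h (suffix_subseq _ _).
rewrite cw in cN.
have [c0|c1] : count_mem n.+2 r = 0 \/ count_mem n.+2 r = 1 by lia.
  rewrite filter_id1; last by rewrite /= (negbTE yN) c0.
  left; rewrite /f1 -nseqS_cat prednK; last by lia.
  by have -> : j = m by lia.
case: r => [|z r'] in mpw sz ha hc hav yin hy sw cw cr c1 cN *; first by [].
have ej : j = m.-1 by lia.
subst j.
case: (eqVneq z n.+2) => [ez|zN].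
  subst z; right; rewrite /= eq_refl (negbTE yN) filter_id1 /=; last first.
    by move: c1; rewrite /= eq_refl /=; lia.
  by [].
exfalso.
have c1' : count_mem n.+2 r' = 1 by move: c1; rewrite /= (negbTE zN).
have Nr : n.+2 \in r' by rewrite -has_pred1 has_count c1'.
have zin : z \in nseq m.-1 n.+2 ++ [:: y, z & r'] by rewrite mem_cat !inE eq_refl !orbT.
have hz := ha z zin.
have zl : z < n.+2 by move/eqP: zN; lia.
case: (ltngtP y z) => [yz|zy|yz].
- have hcz := hc z ltac:(lia).
  have e1 : (n.+2 == z) = false by apply/eqP; lia.
  have e2 : (y == z) = false by apply/eqP; lia.
  rewrite count_cat count_nseq /= e1 e2 eq_refl /= in hcz.
  have zr : z \in r' by rewrite -has_pred1 has_count; move: hcz => /=; lia.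
  have [_ h2] := hav y z yz.
  by move: h2; rewrite sw //= !eq_refl /= sub1seq.
- have hcy := hc y ltac:(lia).
  have e1 : (n.+2 == y) = false by apply/eqP; lia.
  have e2 : (z == y) = false by apply/eqP; lia.
  rewrite count_cat count_nseq /= e1 e2 eq_refl /= in hcy.
  have [_ h2] := hav z y zy.
  have st : subseq [:: y; y] r' by apply: count2_subseq; move: hcy => /=; lia.
  by move: h2; rewrite sw //= e2 /= !eq_refl /= st.
- subst z; have [h1 _] := hav y n.+2 yl.
  by move: h1; rewrite sw //= !eq_refl /= sub1seq.
Qed.

Fixpoint G m n : seq (seq nat) :=
  match n with
  | 0 => [::]
  | 1 => [:: nseq m 1]
  | S (S _ as k) => [seq f1 m n v | v <- G m k] ++ [seq f2 m n v | v <- G m k]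
  end.

Lemma size_G m n : size (G m n.+1) = 2 ^ n.
Proof.
elim: n => // n IH; rewrite [G _ _]/= size_cat !size_map IH expnS; lia.
Qed.

Lemma charG m n w : 3 <= m ->
  (is_multiperm n.+1 m w /\ av w) <-> w \in G m n.+1.
Proof.
move=> hm; elim: n w => [|n IH] w.
  rewrite /= inE; split.
    move=> [/mpP[sz ha _] _]; apply/eqP.
    have : all (pred1 1) w by apply/allP => x /ha h; apply/eqP; lia.
    by move/all_pred1P ->; rewrite sz mul1n.
  move=> /eqP ->; split.
    apply/mpP; split.
    + by rewrite size_nseq mul1n.
    + by move=> x; rewrite mem_nseq => /andP[_ /eqP ->].
    + move=> i hi; rewrite count_nseq; have -> : i = 1 by lia.
      by rewrite /= mul1n.
  move=> a b lt; split; apply/negP => /mem_subseq H.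
    have ha : a \in nseq m 1 by apply: H; rewrite !inE !eq_refl.
    have hb : b \in nseq m 1 by apply: H; rewrite !inE !eq_refl !orbT.
    by move: ha hb; rewrite !mem_nseq => /andP[_ /eqP ea] /andP[_ /eqP eb]; lia.
  have ha : a \in nseq m 1 by apply: H; rewrite !inE !eq_refl.
  have hb : b \in nseq m 1 by apply: H; rewrite !inE !eq_refl !orbT.
  by move: ha hb; rewrite !mem_nseq => /andP[_ /eqP ea] /andP[_ /eqP eb]; lia.
rewrite [G _ _]/= mem_cat; split.
  move=> [mpw avw]; have [mpv avv e] := step_fwd _ _ _ hm mpw avw.
  have vin := iffLR (IH _) (conj mpv avv).
  by case: e => ->; apply/orP; [left|right]; apply/mapP; eexists; eauto.
case/orP => /mapP [v vin ->]; have [mpv avv] := iffRL (IH v) vin;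
  have [[? ?] [? ?]] := step_back _ _ _ hm mpv avv; by split.
Qed.

Lemma nth_nseq_cat k (c : nat) s : nth 0 (nseq k c ++ s) k = nth 0 s 0.
Proof. by rewrite nth_cat size_nseq ltnn subnn. Qed.

Lemma uniq_G m n : 3 <= m -> uniq (G m n.+1).
Proof.
move=> hm; elim: n => // n IH.
have info : forall v, v \in G m n.+1 ->
  [/\ filter (predC1 n.+2) (f1 m n.+2 v) = v,
      filter (predC1 n.+2) (f2 m n.+2 v) = v & head 0 v != n.+2].
  move=> v /(iffRL (charG _ _ _ hm)) [/mpP [sz ha _] _].
  have Nv : n.+2 \notin v by apply/negP => /ha; lia.
  have c0 : count_mem n.+2 v = 0 by apply/count_memPn.
  case: v sz ha Nv c0 => [|y v'] sz ha Nv c0; first by move: sz => /=; lia.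
  have hy := ha y (mem_head _ _).
  have yN : (y == n.+2) = false by apply/eqP; lia.
  have c0' : count_mem n.+2 v' = 0 by move: c0; rewrite /= yN.
  split.
  + by rewrite /f1 filter_nseq /= !eq_refl /= yN /= filter_id1.
  + by rewrite /f2 filter_nseq /= yN !eq_refl /= filter_id1.
  + by rewrite /= yN.
have -> : G m n.+2 = [seq f1 m n.+2 v | v <- G m n.+1] ++
  [seq f2 m n.+2 v | v <- G m n.+1] by [].
rewrite cat_uniq !map_inj_in_uniq ?IH ?andbT //.
- apply/hasPn => x /mapP [v vin ->]; apply/negP => /mapP [u uin e].
  have [_ _ hv] := info v vin.
  have := congr1 (fun s => nth 0 s m.-1) e.
  rewrite /f1 /f2 /= !nth_nseq_cat /= => ev.
  by rewrite ev eq_refl in hv.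
- move=> u v uin vin e; have [_ e1 _] := info u uin; have [_ e2 _] := info v vin.
  by rewrite -e1 -e2 e.
- move=> u v uin vin e; have [e1 _ _] := info u uin; have [e2 _ _] := info v vin.
  by rewrite -e1 -e2 e.
Qed.

Theorem theorem1 (m n : nat) (hm : 3 <= m) (hn : 1 <= n) :
  s_nm n m [:: [:: 1; 1; 2]; [:: 1; 2; 2]] = 2 ^ (n - 1).
Proof.
case: n hn => [//|n] _; rewrite subn1 /= -(size_G m n) /s_nm.
apply: perm_size; apply: uniq_perm.
- by rewrite filter_uniq // uniq_words.
- exact: uniq_G.
move=> w; rewrite mem_filter; apply/idP/idP.
  move=> /andP[/andP[mpw /avoidsP avw] _].
  by apply/charG.
move=> /(iffRL (charG _ _ _ hm)) [mpw /avoidsP avw]; rewrite mpw avw /= mem_words.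
move: mpw => /mpP[sz ha _]; rewrite sz eqxx /=.
by apply/allP.
Qed.
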